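(* Let $0<q<p\le1$, $n\in\mathbb{N}$, and for $x\in[0,1]$ let $\psi_i(t)=(t-x)^i$, $i=1,2$. Then for all $x\in[0,1]$, $$\widetilde{M}_{n,k}^{(p,q)}(\psi_1;x)\le \frac{p^n-q^nx}{q^2[n]_{p,q}}+\left(\frac1q-1\right)x,$$ $$\widetilde{M}_{n,k}^{(p,q)}(\psi_2;x)\le x^2\left(1-\frac{1}{q^2}+\frac{2(q+1)}{q^2[n]_{p,q}}\right)+\frac{(p+q)^2}{q^5}\frac{(p^n-q^nx)}{[n]_{p,q}}x+\frac{p(p+q)}{q^6}\frac{(p^n-q^nx)(p^{n-1}-q^{n-1}x)}{[n]_{p,q}[n-1]_{p,q}}.$$
   Context: For $0<q<p\le1$: $[n]_{p,q}=\frac{p^n-q^n}{p-q}$; $[n]_{p,q}!=[1]_{p,q}\cdots[n]_{p,q}$, $[0]_{p,q}!=1$; $\begin{bmatrix}n\\k\end{bmatrix}_{p,q}=\frac{[n]_{p,q}!}{[k]_{p,q}![n-k]_{p,q}!}$; $(x+y)_{p,q}^n=\prod_{j=0}^{n-1}(p^jx+q^jy)$. The $(p,q)$-integral is $\int_0^a f(t)\,d_{p,q}t=(p-q)a\sum_{j=0}^\infty \frac{q^j}{p^{j+1}}f\!\left(\frac{q^j}{p^{j+1}}a\right)$. Define $m_{n,k}^{(p,q)}(x)=\frac{1}{p^{kn+n(n+1)/2}}\begin{bmatrix}n+k\\k\end{bmatrix}_{p,q}x^k(1-x)^{n+1}_{p,q}$ and $b_{n,k}^{(p,q)}(qt)=\frac{1}{p^{k(n-1)+n(n-1)/2}}\begin{bmatrix}n+k+1\\k\end{bmatrix}_{p,q}(qt)^k(1-qt)^n_{p,q}$.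 The operator is $$\widetilde{M}_{n,k}^{(p,q)}(f;x)=\frac{[n+1]_{p,q}}{p^n}\sum_{k=0}^\infty m_{n,k}^{(p,q)}(x)\,(pq)^{-k}\int_0^1 b_{n,k}^{(p,q)}(qt)f(t)\,d_{p,q}t,\quad 0\le x<1,$$ and $\widetilde{M}_{n,k}^{(p,q)}(f;1)=f(1)$; here $\psi_i$ is applied as a function of $t$ with $x$ fixed. *)

(* Defs.v *)
From Stdlib Require Import Reals.
From Coquelicot Require Import Coquelicot.
Open Scope R_scope.

Definition pq_int (p q : R) (n : nat) : R := (p ^ n - q ^ n) / (p - q).

Fixpoint pq_fact (p q : R) (n : nat) : R :=
  match n with
  | O => 1
  | S m => pq_fact p q m * pq_int p q (S m)
  end.

Definition pq_binom (p q : R) (n k : nat) : R :=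
  pq_fact p q n / (pq_fact p q k * pq_fact p q (n - k)).

Fixpoint pq_pow (p q a b : R) (n : nat) : R :=
  match n with
  | O => 1
  | S m => pq_pow p q a b m * (p ^ m * a + q ^ m * b)
  end.

Definition pq_integral (p q a : R) (f : R -> R) : R :=
  (p - q) * a * Series (fun j => q ^ j / p ^ (S j) * f (q ^ j / p ^ (S j) * a)).

Definition m_nk (p q : R) (n k : nat) (x : R) : R :=
  / p ^ (k * n + n * (n + 1) / 2)%nat * pq_binom p q (n + k) k * x ^ k
  * pq_pow p q 1 (- x) (n + 1).

(* b_{n,k}^{(p,q)}(qt); the exponent k(n-1)+n(n-1)/2 is computed in nat,
   which is exact for n >= 1 (the only case used in the theorem). *)
Definition b_nk (p q : R) (n k : nat) (t : R) : R :=
  / p ^ (k * (n - 1) + n * (n - 1) / 2)%nat * pq_binom p q (n + k + 1) k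
  * (q * t) ^ k * pq_pow p q 1 (- (q * t)) n.

Definition Mop (p q : R) (n : nat) (f : R -> R) (x : R) : R :=
  if Rlt_dec x 1 then
    pq_int p q (S n) / p ^ n *
    Series (fun k => m_nk p q n k x * / (p * q) ^ k *
                     pq_integral p q 1 (fun t => b_nk p q n k t * f t))
  else f 1.

(* Main.v *)
Require Import Defs.
From Stdlib Require Import Reals Lra Lia Psatz.
From Coquelicot Require Import Coquelicot.
Open Scope R_scope.


Definition ri (r : R) (m : nat) : R := (1 - r ^ m) / (1 - r).
Fixpoint rf (r : R) (m : nat) : R :=
  match m with O => 1 | S m' => rf r m' * ri r (S m') end.
Definition Bn (r : R) (n k : nat) : R := rf r (n + k) / (rf r k * rf r n).
Fixpoint Px (r : R) (m : nat) (y : R) : R :=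
  match m with O => 1 | S m' => Px r m' y * (1 - r ^ m' * y) end.
Fixpoint ee (m : nat) : nat := match m with O => O | S m' => (ee m' + m')%nat end.

Section Basic.
Variable r : R.
Hypothesis r0 : 0 < r.
Hypothesis r1 : r < 1.

Lemma pow_lt1 m : (0 < m)%nat -> r ^ m < 1.
Proof. intros H. destruct m. lia. apply pow_lt_1_compat; [lra|lia]. Qed.

Lemma pow_le1 m : r ^ m <= 1.
Proof. destruct m. simpl; lra. apply Rlt_le, pow_lt1; lia. Qed.

Lemma pow_pos' m : 0 < r ^ m.
Proof. apply pow_lt; lra. Qed.

Lemma ri0 : ri r 0 = 0.
Proof. unfold ri; simpl; field; lra. Qed.

Lemma ri_pos m : (0 < m)%nat -> 0 < ri r m.
Proof. intros H. unfold ri. apply Rdiv_lt_0_compat. pose proof (pow_lt1 m H); lra. lra. Qed.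

Lemma ri_S m : ri r (S m) = 1 + r * ri r m.
Proof. unfold ri; simpl; field; lra. Qed.

Lemma ri_add a j : ri r (a + j) = ri r j + r ^ j * ri r a.
Proof. unfold ri. rewrite pow_add. field; lra. Qed.

Lemma ri_le_n m : ri r m <= INR m.
Proof. induction m. rewrite ri0; simpl; lra. rewrite ri_S, S_INR.
  pose proof (pos_INR m). nra. Qed.

Lemma ri_ge1 m : (0 < m)%nat -> 1 <= ri r m.
Proof. intros H. destruct m. lia. rewrite ri_S. destruct m. rewrite ri0; lra.
  pose proof (ri_pos (S m) ltac:(lia)). nra. Qed.

Lemma ri_mono a j : ri r a <= ri r (a + j).
Proof. unfold ri. rewrite pow_add. unfold Rdiv. apply Rmult_le_compat_r.
  apply Rlt_le, Rinv_0_lt_compat; lra.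
  pose proof (pow_le1 j). pose proof (pow_pos' a). nra. Qed.

Lemma rf_pos m : 0 < rf r m.
Proof. induction m; simpl. lra. apply Rmult_lt_0_compat; auto. apply ri_pos; lia. Qed.

Lemma Px_pos m y : 0 <= y < 1 -> 0 < Px r m y.
Proof. intros Hy. induction m; simpl. lra. apply Rmult_lt_0_compat; auto.
  pose proof (pow_le1 m). pose proof (pow_pos' m). nra. Qed.

Lemma Px_shift j y : Px r (S j) y = (1 - y) * Px r j (r * y).
Proof. induction j. simpl; ring.
  change (Px r (S (S j)) y) with (Px r (S j) y * (1 - r ^ (S j) * y)).
  rewrite IHj. simpl. ring. Qed.

End Basic.

Lemma ee_add a b : ee (a + b) = (ee a + ee b + a * b)%nat.
Proof. induction b. rewrite Nat.add_0_r; simpl; lia.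
  rewrite Nat.add_succ_r. simpl. rewrite IHb. nia. Qed.

Lemma ee_two m : (2 * ee m = m * (m - 1))%nat.
Proof. induction m. reflexivity. simpl ee. destruct m. reflexivity. 
  rewrite Nat.mul_add_distr_l, IHm. nia. Qed.

Lemma ee_div m : (m * (m - 1) / 2)%nat = ee m.
Proof. rewrite <- ee_two. rewrite Nat.mul_comm. apply Nat.div_mul. lia. Qed.

Section Conv.
Variables p r : R.
Hypothesis p0 : 0 < p.
Hypothesis r0 : 0 < r.
Hypothesis r1 : r < 1.

Lemma pq_int_conv m : pq_int p (p * r) m = p ^ m * ri r m / p.
Proof. unfold pq_int, ri. rewrite Rpow_mult_distr. assert (p - p * r <> 0) by nra.
  field. split; lra. Qed.

Lemma pq_int_convS m : pq_int p (p * r) (S m) = p ^ m * ri r (S m).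
Proof. rewrite pq_int_conv. simpl. field. lra. Qed.

Lemma pq_fact_conv m : pq_fact p (p * r) m = p ^ (ee m) * rf r m.
Proof. induction m. simpl; ring. simpl pq_fact. rewrite IHm, pq_int_convS.
  simpl ee. rewrite pow_add. simpl rf. ring. Qed.

Lemma pq_binom_conv k j : pq_binom p (p * r) (k + j) k
   = p ^ (k * j) * (rf r (k + j) / (rf r k * rf r j)).
Proof. unfold pq_binom. replace (k + j - k)%nat with j by lia.
  rewrite !pq_fact_conv, ee_add, !pow_add.
  pose proof (rf_pos r r0 r1 k). pose proof (rf_pos r r0 r1 j).
  pose proof (pow_lt p (ee k) p0). pose proof (pow_lt p (ee j) p0).
  field. repeat split; lra. Qed.

Lemma pq_pow_conv m y : pq_pow p (p * r) 1 (- y) m = p ^ (ee m) * Px r m y.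
Proof. induction m. simpl; ring. simpl pq_pow. rewrite IHm. simpl ee. rewrite pow_add.
  simpl Px. rewrite Rpow_mult_distr. ring. Qed.

End Conv.

Lemma isR_scal c a l : is_series a l -> is_series (fun n => c * a n) (c * l).
Proof. intros H. exact (is_series_scal_l c a l H). Qed.
Lemma isR_plus a b la lb : is_series a la -> is_series b lb ->
  is_series (fun n => a n + b n) (la + lb).
Proof. intros H1 H2. exact (is_series_plus a b la lb H1 H2). Qed.
Lemma isR_minus a b la lb : is_series a la -> is_series b lb ->
  is_series (fun n => a n - b n) (la - lb).
Proof. intros H1 H2. exact (@is_series_minus R_AbsRing R_NormedModule a b la lb H1 H2). Qed.
Lemma isR_ext (a b : nat -> R) (l l' : R) : (forall n, a n = b n) -> l = l' -> is_series a l -> is_series b l'.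
Proof. intros H E. subst. apply is_series_ext; auto. Qed.
Lemma isR_incr (a : nat -> R) (l : R) : is_series a l -> is_series (fun k => a (S k)) (l - a O).
Proof. intros H. apply is_series_incr_1. change (plus (l - a O) (a O)) with (l - a O + a O).
  replace (l - a O + a O) with l by ring. exact H. Qed.
Lemma isR_decr (a : nat -> R) (l : R) : is_series (fun k => a (S k)) (l - a O) -> is_series a l.
Proof. intros H. apply is_series_decr_1. replace (plus l (opp (a O))) with (l - a O).
  exact H. reflexivity. Qed.

Section Ser.
Variable r : R.
Hypothesis r0 : 0 < r.
Hypothesis r1 : r < 1.

Lemma beta n : forall a, is_series (fun j => (r ^ (S a)) ^ j * Px r n (r ^ (S j)))
   (rf r a * rf r n / ((1 - r) * rf r (S (a + n)))).
Proof.
  induction n; intros a.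
  - assert (Hg : Rabs (r ^ S a) < 1).
    { rewrite Rabs_pos_eq. apply pow_lt1; auto; lia. apply Rlt_le, pow_pos'; auto. }
    apply (isR_ext (fun j => (r ^ S a) ^ j) _ (/ (1 - r ^ S a)) _).
    + intros j; simpl Px; ring.
    + rewrite Nat.add_0_r. simpl rf. unfold ri.
      pose proof (rf_pos r r0 r1 a). pose proof (pow_lt1 r r0 r1 (S a) ltac:(lia)).
      field. simpl in *. split; [lra|]. split; [nra|]. lra.
    + apply is_series_geom; auto.
  - pose proof (isR_minus _ _ _ _ (IHn a) (isR_scal (r ^ S n) _ _ (IHn (S a)))) as H.
    refine (isR_ext _ _ _ _ _ _ H).
    + intros j. simpl Px.
      replace (r ^ S (S a)) with (r * r ^ S a) by (simpl; ring).
      rewrite Rpow_mult_distr. simpl. ring.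
    + rewrite Nat.add_succ_r. simpl plus. simpl rf.
      pose proof (rf_pos r r0 r1 a). pose proof (rf_pos r r0 r1 n).
      pose proof (rf_pos r r0 r1 (a + n)).
      pose proof (ri_pos r r0 r1 (S (a + n)) ltac:(lia)).
      pose proof (ri_pos r r0 r1 (S (S (a + n))) ltac:(lia)).
      pose proof (ri_pos r r0 r1 (S a) ltac:(lia)).
      pose proof (ri_pos r r0 r1 (S n) ltac:(lia)).
      rewrite <- !Rmult_assoc.
      assert (E : ri r (S (S (a + n))) - r ^ S n * ri r (S a) = ri r (S n)).
      { unfold ri. simpl. rewrite pow_add. field. lra. }
      rewrite <- E. field. repeat split; lra.
Qed.

Lemma Bn_0k k : Bn r 0 k = 1.
Proof. unfold Bn. simpl. pose proof (rf_pos r r0 r1 k). field. lra. Qed.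

Lemma Bn_m0 m : Bn r m 0 = 1.
Proof. unfold Bn. rewrite Nat.add_0_r. simpl. pose proof (rf_pos r r0 r1 m). field. lra. Qed.

Lemma Bn_pos m k : 0 < Bn r m k.
Proof. unfold Bn. pose proof (rf_pos r r0 r1 (m+k)). pose proof (rf_pos r r0 r1 k).
  pose proof (rf_pos r r0 r1 m). apply Rdiv_lt_0_compat; nra. Qed.

Lemma Bn_Sm m k : Bn r (S m) k = Bn r m k * ri r (S (m + k)) / ri r (S m).
Proof. unfold Bn. simpl plus. simpl rf.
  pose proof (rf_pos r r0 r1 (m+k)). pose proof (rf_pos r r0 r1 k).
  pose proof (rf_pos r r0 r1 m). pose proof (ri_pos r r0 r1 (S m) ltac:(lia)).
  pose proof (ri_pos r r0 r1 (S (m + k)) ltac:(lia)).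
  field. repeat split; lra. Qed.

Lemma ri_le_inv m : ri r m <= / (1 - r).
Proof. unfold ri. unfold Rdiv. rewrite <- (Rmult_1_l (/ (1 - r))) at 2.
  apply Rmult_le_compat_r. apply Rlt_le, Rinv_0_lt_compat; lra.
  pose proof (pow_pos' r r0 m); lra. Qed.

Lemma Bn_bound m k : Bn r m k <= (/ (1 - r)) ^ m.
Proof. induction m. rewrite Bn_0k. simpl; lra.
  rewrite Bn_Sm. simpl.
  pose proof (ri_ge1 r r0 r1 (S m) ltac:(lia)). pose proof (ri_le_inv (S (m + k))).
  pose proof (Bn_pos m k). pose proof (ri_pos r r0 r1 (S (m + k)) ltac:(lia)).
  assert (Bn r m k * ri r (S (m + k)) / ri r (S m) <= Bn r m k * ri r (S (m + k))).
  { unfold Rdiv. rewrite <- (Rmult_1_r (Bn r m k * ri r (S (m + k)))) at 2.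
    apply Rmult_le_compat_l. nra. rewrite <- Rinv_1. apply Rinv_le_contravar; lra. }
  assert (Bn r m k * ri r (S (m + k)) <= (/ (1 - r)) ^ m * / (1 - r)).
  { apply Rmult_le_compat; lra. }
  lra. Qed.

Lemma Bn_pascal m k : Bn r (S m) (S k) = r ^ (S k) * Bn r m (S k) + Bn r (S m) k.
Proof. unfold Bn.
  replace (S m + S k)%nat with (S (S (m + k))) by lia.
  replace (m + S k)%nat with (S (m + k)) by lia.
  replace (S m + k)%nat with (S (m + k)) by lia.
  simpl rf.
  pose proof (rf_pos r r0 r1 (m+k)). pose proof (rf_pos r r0 r1 k).
  pose proof (rf_pos r r0 r1 m). pose proof (ri_pos r r0 r1 (S m) ltac:(lia)).
  pose proof (ri_pos r r0 r1 (S k) ltac:(lia)).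
  pose proof (ri_pos r r0 r1 (S (m + k)) ltac:(lia)).
  assert (E : ri r (S (S (m + k))) = ri r (S k) + r ^ S k * ri r (S m)).
  { replace (S (S (m + k))) with (S m + S k)%nat by lia. apply ri_add; auto. }
  rewrite E. field. repeat split; lra. Qed.

Lemma negbin m : forall y, 0 <= y < 1 ->
  is_series (fun k => Bn r m k * y ^ k) (/ Px r (S m) y).
Proof.
  induction m; intros y Hy.
  - apply (isR_ext (fun k => y ^ k) _ (/ (1 - y)) _).
    + intros k. rewrite Bn_0k. ring.
    + simpl. f_equal. ring.
    + apply is_series_geom. rewrite Rabs_pos_eq; lra.
  - set (u := fun k => Bn r (S m) k * y ^ k).
    assert (Hex : ex_series u).
    { apply (ex_series_le u (fun k => (/ (1 - r)) ^ (S m) * y ^ k)).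
      - intros k. unfold u. change norm with Rabs. 
        rewrite Rabs_pos_eq. apply Rmult_le_compat_r. apply pow_le; lra. apply Bn_bound.
        apply Rmult_le_pos. apply Rlt_le, Bn_pos. apply pow_le; lra.
      - eexists. apply isR_scal. apply is_series_geom. rewrite Rabs_pos_eq; lra. }
    destruct Hex as [l Hl].
    assert (Hry : 0 <= r * y < 1) by nra.
    pose proof (isR_incr _ _ Hl) as H1.
    pose proof (isR_incr _ _ (IHm (r * y) Hry)) as H2.
    pose proof (isR_plus _ _ _ _ H2 (isR_scal y _ _ Hl)) as H3.
    assert (H4 : is_series (fun k => u (S k))
                 (/ Px r (S m) (r * y) - Bn r m 0 * (r * y) ^ 0 + y * l)).
    { refine (isR_ext _ _ _ _ _ eq_refl H3). intros k. unfold u.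
      rewrite Bn_pascal. rewrite Rpow_mult_distr. simpl. ring. }
    apply is_series_unique in H1. apply is_series_unique in H4.
    rewrite H1 in H4. unfold u in H4. rewrite Bn_m0, Bn_m0 in H4. rewrite !pow_O in H4.
    assert (El : l = / Px r (S (S m)) y).
    { rewrite Px_shift. pose proof (Px_pos r r0 r1 (S m) (r * y) Hry).
      assert (E : l * (1 - y) = / Px r (S m) (r * y)).
      { rewrite Rmult_minus_distr_l, Rmult_1_r. rewrite (Rmult_comm l y). lra. }
      assert (G : forall l0 P0 : R, 0 < P0 -> l0 * (1 - y) = / P0 -> l0 = / ((1 - y) * P0)).
      { intros l0 P0 HP E0. rewrite Rinv_mult, <- E0. field. lra. }
      apply G; auto. }
    rewrite <- El. exact Hl.
Qed.

End Ser.

Section W.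
Variable r : R.
Hypothesis r0 : 0 < r.
Hypothesis r1 : r < 1.
Variable x : R.
Hypothesis x0 : 0 <= x.
Hypothesis x1 : x < 1.

Definition w n k := Bn r n k * x ^ k * Px r (S n) x.

Lemma Bn_shiftk n k : Bn r n (S k) * ri r (S k) / ri r (n + S k) = Bn r n k.
Proof. unfold Bn. replace (n + S k)%nat with (S (n + k)) by lia. simpl rf.
  pose proof (rf_pos r r0 r1 (n+k)). pose proof (rf_pos r r0 r1 k).
  pose proof (rf_pos r r0 r1 n). pose proof (ri_pos r r0 r1 (S k) ltac:(lia)).
  pose proof (ri_pos r r0 r1 (S (n + k)) ltac:(lia)).
  field. repeat split; lra. Qed.

Lemma Bn_shiftn n k : Bn r (S n) k / ri r (S n + k) = Bn r n k / ri r (S n).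
Proof. rewrite Bn_Sm; auto. simpl plus.
  pose proof (ri_pos r r0 r1 (S n) ltac:(lia)).
  pose proof (ri_pos r r0 r1 (S (n + k)) ltac:(lia)).
  replace (S n + k)%nat with (S (n + k)) by lia. field. split; lra. Qed.

Lemma W0 n : is_series (w n) 1.
Proof. pose proof (Px_pos r r0 r1 (S n) x (conj x0 x1)).
  apply (isR_ext (fun k => Px r (S n) x * (Bn r n k * x ^ k)) _ (Px r (S n) x * / Px r (S n) x) _).
  - intros k; unfold w; ring.
  - field; lra.
  - apply isR_scal, negbin; auto.
Qed.

Lemma Wc m c l (a : nat -> R) : (forall k, a k = c * w m k) -> l = c ->
  is_series a l.
Proof. intros H E. apply (isR_ext (fun k => c * w m k) _ (c * 1) _).
  intros; symmetry; auto. subst; ring. apply isR_scal, W0. Qed.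

Lemma W1 n : is_series (fun k => w n k * (ri r k / ri r (n + k))) x.
Proof. apply isR_decr. rewrite ri0; auto.
  apply (Wc n x); [|unfold Rdiv; ring].
  intros k. unfold w. rewrite <- (Bn_shiftk n k). simpl. field.
  pose proof (ri_pos r r0 r1 (n + S k) ltac:(lia)). lra.
Qed.

Lemma W1' n : is_series (fun k => w (S n) k / ri r (S n + k)) ((1 - r ^ (S n) * x) / ri r (S n)).
Proof. pose proof (Px_pos r r0 r1 (S n) x (conj x0 x1)).
  pose proof (ri_pos r r0 r1 (S n) ltac:(lia)).
  apply (Wc n ((1 - r ^ (S n) * x) / ri r (S n))); auto.
  intros k. unfold w. 
  replace (Bn r (S n) k * x ^ k * Px r (S (S n)) x / ri r (S n + k)) with
    (Bn r (S n) k / ri r (S n + k) * x ^ k * Px r (S (S n)) x) by (unfold Rdiv; ring).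
  rewrite Bn_shiftn. change (Px r (S (S n)) x) with (Px r (S n) x * (1 - r ^ (S n) * x)).
  field. lra.
Qed.

Lemma W2a n : is_series (fun k => w n k * (ri r k * ri r (k - 1) / (ri r (n + k) * ri r (n + k - 1)))) (x ^ 2).
Proof. apply isR_decr. rewrite ri0; auto. rewrite Rmult_0_l, Rdiv_0_l, Rmult_0_r, Rminus_0_r.
  apply isR_decr. replace (S 0 - 1)%nat with 0%nat by lia. rewrite ri0; auto.
  rewrite Rmult_0_r, Rdiv_0_l, Rmult_0_r, Rminus_0_r.
  apply (Wc n (x ^ 2)); auto.
  intros k. unfold w.
  replace (S (S k) - 1)%nat with (S k) by lia.
  replace (n + S (S k) - 1)%nat with (n + S k)%nat by lia.
  pose proof (ri_pos r r0 r1 (n + S (S k)) ltac:(lia)).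
  pose proof (ri_pos r r0 r1 (n + S k) ltac:(lia)).
  rewrite <- (Bn_shiftk n k). rewrite <- (Bn_shiftk n (S k)). simpl. field. lra.
Qed.

Lemma W2b n : is_series (fun k => w (S n) k * (ri r k / (ri r (S n + k) * ri r (S n + k - 1))))
   (x * (1 - r ^ (S n) * x) / ri r (S n)).
Proof. apply isR_decr. rewrite ri0; auto. rewrite Rdiv_0_l, Rmult_0_r, Rminus_0_r.
  pose proof (ri_pos r r0 r1 (S n) ltac:(lia)).
  apply (Wc n (x * (1 - r ^ (S n) * x) / ri r (S n))); auto.
  intros k. unfold w.
  replace (S n + S k - 1)%nat with (S n + k)%nat by lia.
  pose proof (ri_pos r r0 r1 (S n + S k) ltac:(lia)).
  pose proof (ri_pos r r0 r1 (S n + k) ltac:(lia)).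
  replace (Bn r (S n) (S k) * x ^ S k * Px r (S (S n)) x * (ri r (S k) / (ri r (S n + S k) * ri r (S n + k))))
   with ((Bn r (S n) (S k) * ri r (S k) / ri r (S n + S k)) / ri r (S n + k) * x ^ S k * Px r (S (S n)) x)
   by (field; lra).
  rewrite Bn_shiftk, Bn_shiftn. change (Px r (S (S n)) x) with (Px r (S n) x * (1 - r ^ (S n) * x)).
  simpl. field. lra.
Qed.

Lemma W2c n : is_series (fun k => w (S (S n)) k / (ri r (S (S n) + k) * ri r (S (S n) + k - 1)))
   ((1 - r ^ (S n) * x) * (1 - r ^ (S (S n)) * x) / (ri r (S (S n)) * ri r (S n))).
Proof.
  pose proof (ri_pos r r0 r1 (S n) ltac:(lia)).
  pose proof (ri_pos r r0 r1 (S (S n)) ltac:(lia)).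
  apply (Wc n ((1 - r ^ (S n) * x) * (1 - r ^ (S (S n)) * x) / (ri r (S (S n)) * ri r (S n)))); auto.
  intros k. unfold w.
  replace (S (S n) + k - 1)%nat with (S n + k)%nat by lia.
  pose proof (ri_pos r r0 r1 (S (S n) + k) ltac:(lia)).
  pose proof (ri_pos r r0 r1 (S n + k) ltac:(lia)).
  replace (Bn r (S (S n)) k * x ^ k * Px r (S (S (S n))) x / (ri r (S (S n) + k) * ri r (S n + k)))
   with ((Bn r (S (S n)) k / ri r (S (S n) + k)) / ri r (S n + k) * x ^ k * Px r (S (S (S n))) x)
   by (field; lra).
  rewrite Bn_shiftn.
  replace (Bn r (S n) k / ri r (S (S n)) / ri r (S n + k)) with
    (Bn r (S n) k / ri r (S n + k) / ri r (S (S n))) by (field; lra).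
  rewrite Bn_shiftn.
  change (Px r (S (S (S n))) x) with (Px r (S n) x * (1 - r ^ (S n) * x) * (1 - r ^ (S (S n)) * x)).
  field. lra.
Qed.

End W.

Lemma frac_le a b c d : 0 < b -> 0 < d -> c * b <= a * d -> c / d <= a / b.
Proof. intros Hb Hd H.
  assert (E : a / b - c / d = (a * d - c * b) / (b * d)) by (field; lra).
  assert (0 <= (a * d - c * b) / (b * d)).
  { apply Rdiv_le_0_compat; nra. } lra. Qed.

Section PW.
Variable r : R.
Hypothesis r0 : 0 < r.
Hypothesis r1 : r < 1.

Definition A n k := ri r (S k) / ri r (n + S (S k)).

Lemma ri_unf m : ri r m = (1 - r ^ m) / (1 - r).
Proof. reflexivity. Qed.

Lemma A_bounds n k : 0 <= A n k <= 1.
Proof. unfold A. pose proof (ri_pos r r0 r1 (S k) ltac:(lia)).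
  pose proof (ri_pos r r0 r1 (n + S (S k)) ltac:(lia)).
  pose proof (ri_mono r r0 r1 (S k) (S n)). replace (S k + S n)%nat with (n + S (S k))%nat in H1 by lia.
  split. apply Rlt_le, Rdiv_lt_0_compat; lra.
  apply (Rmult_le_reg_r (ri r (n + S (S k)))); auto. unfold Rdiv.
  rewrite Rmult_assoc, Rinv_l; lra. Qed.

Lemma P1 n k : A (S n) k <= 1 / (r ^ 2 * ri r (S n + k)) + ri r k / (r * ri r (S n + k)).
Proof. unfold A.
  pose proof (ri_pos r r0 r1 (S n + k) ltac:(lia)).
  pose proof (ri_pos r r0 r1 (S n + S (S k)) ltac:(lia)).
  assert (E1 : ri r (S n + S (S k)) = ri r 2 + r ^ 2 * ri r (S n + k)).
  { rewrite <- ri_add; auto. f_equal; lia. }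
  assert (E2 : ri r (S k) = 1 + r * ri r k) by (apply ri_S; auto).
  pose proof (ri_pos r r0 r1 2 ltac:(lia)).
  pose proof (ri_pos r r0 r1 (S k) ltac:(lia)).
  replace (1 / (r ^ 2 * ri r (S n + k)) + ri r k / (r * ri r (S n + k)))
    with (ri r (S k) / (r ^ 2 * ri r (S n + k))) by (rewrite E2; field; lra).
  assert (0 < r ^ 2) by (apply pow_lt; lra).
  apply frac_le.
  - apply Rmult_lt_0_compat; lra.
  - lra.
  - rewrite E1. assert (0 <= ri r (S k) * ri r 2) by nra. nra.
Qed.

Lemma P2 m k : ri r m / ri r (S (S m)) * (ri r k / ri r (S (S m) + k)) <= A (S (S m)) k.
Proof. unfold A.
  pose proof (ri_pos r r0 r1 (S (S m)) ltac:(lia)).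
  pose proof (ri_pos r r0 r1 (S (S m) + k) ltac:(lia)).
  pose proof (ri_pos r r0 r1 (S (S m) + S (S k)) ltac:(lia)).
  replace (ri r m / ri r (S (S m)) * (ri r k / ri r (S (S m) + k))) with
    ((ri r m * ri r k) / (ri r (S (S m)) * ri r (S (S m) + k))) by (field; lra).
  apply frac_le; [lra | nra |].
  rewrite !ri_unf. rewrite !pow_add. simpl.
  set (u := r ^ k). set (rho := r ^ m).
  assert (0 < u <= 1) by (split; [apply pow_pos'; auto | apply pow_le1; auto]).
  assert (0 < rho <= 1) by (split; [apply pow_pos'; auto | apply pow_le1; auto]).
  assert (Hr : 0 < 1 - r) by lra.
  assert (K1 : (1 - u) <= 1 - r * u) by nra.
  assert (K2 : (1 - rho) * (1 - r * (r * rho) * (r * (r * u))) <=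
               (1 - r * (r * rho)) * (1 - r * (r * rho) * u)).
  { assert (E : (1 - r * (r * rho)) * (1 - r * (r * rho) * u) - (1 - rho) * (1 - r * (r * rho) * (r * (r * u)))
       = rho * (1 - r * r) * (1 - r * r * u)) by ring.
    assert (0 <= rho * (1 - r * r) * (1 - r * r * u)).
    { apply Rmult_le_pos. apply Rmult_le_pos; nra. nra. } lra. }
  assert (K3 : 0 <= (1 - rho) * (1 - r * (r * rho) * (r * (r * u)))).
  { apply Rmult_le_pos. lra. assert (r * (r * rho) * (r * (r * u)) <= 1).
    { assert (r * (r * rho) <= 1) by nra. assert (r * (r * u) <= 1) by nra.
      assert (0 <= r * (r * u)) by nra. nra. } lra. }
  assert (K4 : 0 <= 1 - u) by lra.
  assert (K : (1 - rho) * (1 - u) * (1 - r * (r * rho) * (r * (r * u))) <=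
          (1 - r * u) * ((1 - r * (r * rho)) * (1 - r * (r * rho) * u))).
  { replace ((1 - rho) * (1 - u) * (1 - r * (r * rho) * (r * (r * u)))) with
      ((1 - u) * ((1 - rho) * (1 - r * (r * rho) * (r * (r * u))))) by ring.
    apply Rmult_le_compat; lra. }
  assert (Hi : 0 < / (1 - r) ^ 3) by (apply Rinv_0_lt_compat, pow_lt; lra).
  replace ((1 - rho) / (1 - r) * ((1 - u) / (1 - r)) * ((1 - r * (r * rho) * (r * (r * u))) / (1 - r)))
    with ((1 - rho) * (1 - u) * (1 - r * (r * rho) * (r * (r * u))) * / (1 - r) ^ 3) by (field; lra).
  replace ((1 - r * u) / (1 - r) * ((1 - r * (r * rho)) / (1 - r) * ((1 - r * (r * rho) * u) / (1 - r))))
    with ((1 - r * u) * ((1 - r * (r * rho)) * (1 - r * (r * rho) * u)) * / (1 - r) ^ 3) by (field; lra).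
  apply Rmult_le_compat_r; lra.
Qed.

Lemma numid k : ri r (S k) * ri r (S (S k)) =
  (1 + r) + r * (1 + r) ^ 2 * ri r k + r ^ 4 * (ri r k * ri r (k - 1)).
Proof. destruct k.
  - rewrite !ri_S, ri0; auto. simpl. ring.
  - replace (S k - 1)%nat with k by lia. rewrite !(ri_S r r1 (S _)), (ri_S r r1 k). ring.
Qed.

Lemma numpos k : 0 <= ri r (S k) * ri r (S (S k)).
Proof. pose proof (ri_pos r r0 r1 (S k) ltac:(lia)). pose proof (ri_pos r r0 r1 (S (S k)) ltac:(lia)). nra. Qed.

Lemma P3 m k : A (S (S m)) k * A (S (S m)) (S k) <=
  (1 + r) / r ^ 6 * (1 / (ri r (S (S m) + k) * ri r (S (S m) + k - 1)))
  + (1 + r) ^ 2 / r ^ 5 * (ri r k / (ri r (S (S m) + k) * ri r (S (S m) + k - 1)))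
  + 1 / r ^ 2 * (ri r k * ri r (k - 1) / (ri r (S (S m) + k) * ri r (S (S m) + k - 1))).
Proof. unfold A.
  replace (S (S m) + k - 1)%nat with (S m + k)%nat by lia.
  pose proof (ri_pos r r0 r1 (S (S m) + k) ltac:(lia)).
  pose proof (ri_pos r r0 r1 (S m + k) ltac:(lia)).
  pose proof (ri_pos r r0 r1 (S (S m) + S (S k)) ltac:(lia)).
  pose proof (ri_pos r r0 r1 (S (S m) + S (S (S k))) ltac:(lia)).
  pose proof (ri_pos r r0 r1 2 ltac:(lia)).
  pose proof (ri_pos r r0 r1 4 ltac:(lia)).
  assert (E1 : ri r (S (S m) + S (S k)) = ri r 2 + r ^ 2 * ri r (S (S m) + k)).
  { rewrite <- ri_add; auto. f_equal; lia. }
  assert (E2 : ri r (S (S m) + S (S (S k))) = ri r 4 + r ^ 4 * ri r (S m + k)).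
  { rewrite <- ri_add; auto. f_equal; lia. }
  assert (Hr2 : 0 < r ^ 2) by (apply pow_lt; lra).
  assert (Hr4 : 0 < r ^ 4) by (apply pow_lt; lra).
  assert (Hr5 : 0 < r ^ 5) by (apply pow_lt; lra).
  assert (Hr6 : 0 < r ^ 6) by (apply pow_lt; lra).
  set (D := ri r (S (S m) + k) * ri r (S m + k)).
  assert (HD : 0 < D) by (unfold D; nra).
  replace ((1 + r) / r ^ 6 * (1 / D) + (1 + r) ^ 2 / r ^ 5 * (ri r k / D) +
     1 / r ^ 2 * (ri r k * ri r (k - 1) / D)) with
    (((1 + r) + r * (1 + r) ^ 2 * ri r k + r ^ 4 * (ri r k * ri r (k - 1))) / (r ^ 6 * D))
    by (simpl; field; split; lra).
  rewrite <- numid.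
  replace (ri r (S k) / ri r (S (S m) + S (S k)) * (ri r (S (S k)) / ri r (S (S m) + S (S (S k)))))
    with (ri r (S k) * ri r (S (S k)) / (ri r (S (S m) + S (S k)) * ri r (S (S m) + S (S (S k)))))
    by (field; lra).
  apply frac_le. nra. nra.
  pose proof (numpos k).
  apply Rmult_le_compat_l; auto.
  rewrite E1, E2. unfold D.
  assert (E6 : r ^ 6 = r ^ 2 * r ^ 4) by (simpl; ring). rewrite E6.
  assert (r ^ 2 * ri r (S (S m) + k) <= ri r 2 + r ^ 2 * ri r (S (S m) + k)) by lra.
  assert (r ^ 4 * ri r (S m + k) <= ri r 4 + r ^ 4 * ri r (S m + k)) by lra.
  assert (0 <= r ^ 2 * ri r (S (S m) + k)) by nra.
  assert (0 <= r ^ 4 * ri r (S m + k)) by nra.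
  replace (r ^ 2 * r ^ 4 * (ri r (S (S m) + k) * ri r (S m + k))) with
    ((r ^ 2 * ri r (S (S m) + k)) * (r ^ 4 * ri r (S m + k))) by ring.
  apply Rmult_le_compat; lra.
Qed.
End PW.

Section Red.
Variables p r : R.
Hypothesis p0 : 0 < p.
Hypothesis r0 : 0 < r.
Hypothesis r1 : r < 1.

Lemma b_conv n k t y : p * r * t = y ->
  b_nk p (p * r) (S n) k t = p ^ (2 * k) * (rf r (k + S (S n)) / (rf r k * rf r (S (S n)))) * y ^ k * Px r (S n) y.
Proof. intros Hy. unfold b_nk. rewrite Hy.
  replace (S n + k + 1)%nat with (k + S (S n))%nat by lia.
  rewrite pq_binom_conv; auto.
  rewrite ee_div. replace (S n - 1)%nat with n by lia.
  rewrite pq_pow_conv; auto.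
  replace (k * S (S n))%nat with (k * n + 2 * k)%nat by ring.
  rewrite !pow_add.
  pose proof (pow_lt p (k * n) p0). pose proof (pow_lt p (ee (S n)) p0).
  pose proof (rf_pos r r0 r1 k). pose proof (rf_pos r r0 r1 (S (S n))). field. repeat split; lra.
Qed.

Lemma m_conv n k x : m_nk p (p * r) (S n) k x = w r x (S n) k.
Proof. unfold m_nk, w, Bn.
  assert (E : (S n * (S n + 1) / 2)%nat = ee (S (S n))).
  { rewrite <- ee_div. f_equal. replace (S (S n) - 1)%nat with (S n) by lia. lia. }
  rewrite E. replace (S n + k)%nat with (k + S n)%nat by lia.
  rewrite pq_binom_conv; auto.
  replace (S n + 1)%nat with (S (S n)) by lia.
  rewrite pq_pow_conv; auto. rewrite !pow_add.
  pose proof (pow_lt p (k * S n) p0). pose proof (pow_lt p (ee (S (S n))) p0).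
  pose proof (rf_pos r r0 r1 k). pose proof (rf_pos r r0 r1 (S n)). field. repeat split; lra.
Qed.


Definition T n a := rf r a * rf r (S n) / ((1 - r) * rf r (S (a + S n))).

Lemma inner n k c0 c1 c2 (f : R -> R) : (forall t, f t = c0 + c1 * t + c2 * t ^ 2) ->
  is_series (fun j => (p * r) ^ j / p ^ (S j) *
      (b_nk p (p * r) (S n) k ((p * r) ^ j / p ^ (S j) * 1) * f ((p * r) ^ j / p ^ (S j) * 1)))
   (p ^ (2 * k) * (rf r (k + S (S n)) / (rf r k * rf r (S (S n)))) * r ^ k / p *
     (c0 * T n k + c1 / p * T n (S k) + c2 / p ^ 2 * T n (S (S k)))).
Proof. intros Hf.
  set (C := p ^ (2 * k) * (rf r (k + S (S n)) / (rf r k * rf r (S (S n)))) * r ^ k / p).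
  pose proof (isR_scal C _ _ (isR_plus _ _ _ _ (isR_plus _ _ _ _
     (isR_scal c0 _ _ (beta r r0 r1 (S n) k))
     (isR_scal (c1 / p) _ _ (beta r r0 r1 (S n) (S k))))
     (isR_scal (c2 / p ^ 2) _ _ (beta r r0 r1 (S n) (S (S k)))))) as H.
  refine (isR_ext _ _ _ _ _ eq_refl H).
  intros j.
  assert (Et : (p * r) ^ j / p ^ (S j) * 1 = r ^ j / p).
  { rewrite Rpow_mult_distr. simpl. pose proof (pow_lt p j p0). field. lra. }
  assert (Ey : p * r * ((p * r) ^ j / p ^ (S j) * 1) = r ^ (S j)).
  { rewrite Et. simpl. field. lra. }
  rewrite (b_conv _ _ _ _ Ey). rewrite Hf. rewrite Et.
  assert (E1 : (r ^ S k) ^ j = r ^ j * (r ^ k) ^ j) by (simpl; apply Rpow_mult_distr).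
  assert (E2 : (r ^ S (S k)) ^ j = r ^ j * r ^ j * (r ^ k) ^ j)
    by (simpl; rewrite !Rpow_mult_distr; ring).
  assert (E3 : (r ^ S (S (S k))) ^ j = r ^ j * r ^ j * r ^ j * (r ^ k) ^ j)
    by (simpl; rewrite !Rpow_mult_distr; ring).
  assert (E4 : (r ^ S j) ^ k = r ^ k * (r ^ k) ^ j).
  { simpl. rewrite Rpow_mult_distr. rewrite <- !pow_mult. rewrite Nat.mul_comm. reflexivity. }
  assert (E5 : (p * r) ^ j / p ^ S j = r ^ j / p).
  { rewrite Rpow_mult_distr. simpl. pose proof (pow_lt p j p0). field. lra. }
  rewrite E1, E2, E3, E4, E5. unfold C.
  pose proof (rf_pos r r0 r1 k). pose proof (rf_pos r r0 r1 (S (S n))).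
  field. repeat split; lra.
Qed.


Lemma Mop_red n c0 c1 c2 (f : R -> R) x : 0 <= x < 1 ->
  (forall t, f t = c0 + c1 * t + c2 * t ^ 2) ->
  Mop p (p * r) (S n) f x = Series (fun k => w r x (S n) k *
     (c0 + c1 * A r (S n) k / p + c2 * (A r (S n) k * A r (S n) (S k)) / p ^ 2)).
Proof. intros Hx Hf. unfold Mop. destruct (Rlt_dec x 1) as [_|C]; [|lra].
  rewrite pq_int_convS; auto.
  rewrite (Series_ext _ (fun k => / ri r (S (S n)) * (w r x (S n) k *
     (c0 + c1 * A r (S n) k / p + c2 * (A r (S n) k * A r (S n) (S k)) / p ^ 2)))).
  2:{ intros k. unfold pq_integral. rewrite (is_series_unique _ _ (inner n k c0 c1 c2 f Hf)).
    rewrite m_conv. unfold T, A.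
    set (M := (k + S n)%nat).
    replace (k + S (S n))%nat with (S M) by (unfold M; lia).
    replace (S (S k + S n))%nat with (S (S M)) by (unfold M; lia).
    replace (S (S (S k) + S n))%nat with (S (S (S M))) by (unfold M; lia).
    replace (S n + S (S k))%nat with (S (S M)) by (unfold M; lia).
    replace (S n + S (S (S k)))%nat with (S (S (S M))) by (unfold M; lia).
    replace (S (k + S n)) with (S M) by reflexivity.
    simpl rf.
    assert (Ep : (p * (p * r)) ^ k = p ^ (2 * k) * r ^ k).
    { rewrite !Rpow_mult_distr. replace (2 * k)%nat with (k + k)%nat by lia. rewrite pow_add. ring. }
    rewrite Ep.
    pose proof (rf_pos r r0 r1 k). pose proof (rf_pos r r0 r1 n). pose proof (rf_pos r r0 r1 M).
    pose proof (ri_pos r r0 r1 (S k) ltac:(lia)). pose proof (ri_pos r r0 r1 (S (S k)) ltac:(lia)).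
    pose proof (ri_pos r r0 r1 (S n) ltac:(lia)). pose proof (ri_pos r r0 r1 (S (S n)) ltac:(lia)).
    pose proof (ri_pos r r0 r1 (S M) ltac:(lia)). pose proof (ri_pos r r0 r1 (S (S M)) ltac:(lia)).
    pose proof (ri_pos r r0 r1 (S (S (S M))) ltac:(lia)).
    pose proof (pow_lt p (2 * k) p0). pose proof (pow_lt r k r0).
    field. repeat split; lra. }
  rewrite Series_scal_l. pose proof (ri_pos r r0 r1 (S (S n)) ltac:(lia)).
  pose proof (pow_lt p (S n) p0). field. split; lra.
Qed.

End Red.

Lemma ser_cmp (a b K : nat -> R) lb : (forall k, a k <= b k) -> (forall k, Rabs (a k) <= K k) ->
  ex_series K -> is_series b lb -> Series a <= lb.
Proof. intros Hab HK [lK HlK] Hb.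
  assert (Ha : ex_series a) by (apply (ex_series_le a K); [exact HK | exists lK; exact HlK]).
  destruct Ha as [la Hla].
  pose proof (isR_minus _ _ _ _ Hb Hla) as Hd.
  assert (0 <= lb - la).
  { rewrite <- (is_series_unique _ _ Hd).
    assert (Series (fun _ => 0) <= Series (fun k => b k - a k)).
    { apply Series_le. intros k; split; [lra|]. specialize (Hab k); lra.
      exists (lb - la); exact Hd. }
    assert (Z : Series (fun _ : nat => 0) = 0).
    { rewrite (Series_ext _ (fun k : nat => 0 * 0)) by (intros; ring). rewrite Series_scal_l. ring. }
    rewrite Z in H. exact H. }
  rewrite (is_series_unique _ _ Hla). lra.
Qed.

Lemma w_nonneg r x n k : 0 < r -> r < 1 -> 0 <= x < 1 -> 0 <= w r x n k.
Proof. intros. unfold w. pose proof (Bn_pos r H H0 n k). pose proof (Px_pos r H H0 (S n) x H1).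
  pose proof (pow_le x k (proj1 H1)). apply Rmult_le_pos; [apply Rmult_le_pos|]; lra. Qed.

Lemma part1_lt p r n x : 0 < p -> p <= 1 -> 0 < r -> r < 1 -> 0 <= x < 1 ->
  Mop p (p * r) (S n) (fun t => t - x) x <=
  (p ^ (S n) - (p * r) ^ (S n) * x) / ((p * r) ^ 2 * pq_int p (p * r) (S n)) + (1 / (p * r) - 1) * x.
Proof. intros p0 p1 r0 r1 Hx.
  rewrite (Mop_red p r p0 r0 r1 n (- x) 1 0); auto; [| intros; ring].
  set (bser := fun k => - x * w r x (S n) k + (1 / (p * r ^ 2)) * (w r x (S n) k / ri r (S n + k))
                  + (1 / (p * r)) * (w r x (S n) k * (ri r k / ri r (S n + k)))).
  assert (Hb : is_series bser (- x * 1 + (1 / (p * r ^ 2)) * ((1 - r ^ (S n) * x) / ri r (S n))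
                  + (1 / (p * r)) * x)).
  { apply isR_plus. apply isR_plus. apply isR_scal, W0; auto; lra.
    apply isR_scal, W1'; auto; lra. apply isR_scal, W1; auto; lra. }
  eapply Rle_trans. apply (ser_cmp _ bser (fun k => (x + 1 / p) * w r x (S n) k)).
  - intros k. unfold bser. pose proof (w_nonneg r x (S n) k r0 r1 Hx).
    pose proof (P1 r r0 r1 n k).
    pose proof (ri_pos r r0 r1 (S n + k) ltac:(lia)).
    replace (- x * w r x (S n) k + 1 / (p * r ^ 2) * (w r x (S n) k / ri r (S n + k)) +
      1 / (p * r) * (w r x (S n) k * (ri r k / ri r (S n + k)))) with
      (w r x (S n) k * (- x + (1 / (r ^ 2 * ri r (S n + k)) + ri r k / (r * ri r (S n + k))) / p))
      by (field; lra).
    apply Rmult_le_compat_l; auto.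
    assert (A r (S n) k / p <= (1 / (r ^ 2 * ri r (S n + k)) + ri r k / (r * ri r (S n + k))) / p).
    { unfold Rdiv. apply Rmult_le_compat_r; auto. apply Rlt_le, Rinv_0_lt_compat; lra. }
    lra.
  - intros k. pose proof (w_nonneg r x (S n) k r0 r1 Hx). pose proof (A_bounds r r0 r1 (S n) k).
    rewrite Rabs_mult, (Rabs_pos_eq (w _ _ _ _)); auto. rewrite Rmult_comm.
    apply Rmult_le_compat_r; auto.
    assert (0 <= A r (S n) k / p <= 1 / p).
    { split. apply Rdiv_le_0_compat; lra. unfold Rdiv. apply Rmult_le_compat_r.
      apply Rlt_le, Rinv_0_lt_compat; lra. lra. }
    apply Rabs_le. split; nra.
  - eexists. apply isR_scal, W0; auto; lra.
  - exact Hb.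
  - rewrite pq_int_convS; auto. rewrite !Rpow_mult_distr.
    pose proof (ri_pos r r0 r1 (S n) ltac:(lia)). pose proof (pow_lt p n p0).
    right. simpl. field. repeat split; lra.
Qed.



Lemma pow_le1_compat p m : 0 <= p -> p <= 1 -> p ^ m <= 1.
Proof. intros. induction m. simpl; lra. simpl. pose proof (pow_le p m H). nra. Qed.

Lemma bern p m : 0 < p -> p <= 1 -> INR m * p ^ m * (1 - p) <= 1 - p ^ m.
Proof. intros p0 p1. induction m. simpl; lra.
  rewrite S_INR. simpl pow.
  assert (0 < p ^ m) by (apply pow_lt; lra). assert (p ^ m <= 1) by (apply pow_le1_compat; lra).
  pose proof (pos_INR m).
  assert (INR m * (p * p ^ m) * (1 - p) <= INR m * p ^ m * (1 - p)).
  { apply Rmult_le_compat_r. lra. apply Rmult_le_compat_l. lra. nra. }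
  assert (p * p ^ m * (1 - p) <= p ^ m * (1 - p)).
  { assert (0 <= (1 - p) * (p ^ m * (1 - p))) by (apply Rmult_le_pos; [lra| apply Rmult_le_pos; lra]). nra. }
  replace ((INR m + 1) * (p * p ^ m) * (1 - p)) with
    (INR m * (p * p ^ m) * (1 - p) + p * p ^ m * (1 - p)) by ring.
  lra.
Qed.

Lemma key p r m : 0 < p -> p <= 1 -> 0 < r -> r < 1 ->
  p * p ^ m * (ri r (S (S m)) - p * r ^ 2 * ri r m) <= 1 + p * r.
Proof. intros p0 p1 r0 r1.
  rewrite (ri_S r r1 (S m)), (ri_S r r1 m).
  set (t := ri r m). set (P := p ^ m).
  assert (Ht : 0 <= t <= INR m).
  { split. destruct m. unfold t; rewrite ri0; auto; lra. apply Rlt_le, ri_pos; auto; lia.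
    apply ri_le_n; auto. }
  assert (HP : 0 < P <= 1) by (split; [apply pow_lt; lra | apply pow_le1_compat; lra]).
  pose proof (bern p m p0 p1). fold P in H.
  assert (a : 0 <= 1 - p * P) by nra.
  assert (b1 : p * r * (INR m * P * (1 - p)) <= p * r * (1 - P)) by (apply Rmult_le_compat_l; nra).
  assert (b2 : p * r * (t * P * (1 - p)) <= p * r * (INR m * P * (1 - p))).
  { apply Rmult_le_compat_l. nra. apply Rmult_le_compat_r. nra. apply Rmult_le_compat_r; lra. }
  assert (c : p * (r * r) * t * P * (1 - p) <= p * r * (t * P * (1 - p))).
  { assert (0 <= p * t * P * (1 - p)). { apply Rmult_le_pos. apply Rmult_le_pos. nra. lra. lra. }
    assert (0 <= (p * t * P * (1 - p)) * (r * (1 - r))) by (apply Rmult_le_pos; nra).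
    nra. }
  simpl. idtac "KK". Show. nra.
Qed.

Lemma part2_lt p r m x : 0 < p -> p <= 1 -> 0 < r -> r < 1 -> 0 <= x < 1 ->
  Mop p (p * r) (S (S m)) (fun t => (t - x) ^ 2) x <=
       x ^ 2 * (1 - 1 / (p * r) ^ 2 + 2 * (p * r + 1) / ((p * r) ^ 2 * pq_int p (p * r) (S (S m))))
       + (p + p * r) ^ 2 / (p * r) ^ 5 * ((p ^ (S (S m)) - (p * r) ^ (S (S m)) * x) / pq_int p (p * r) (S (S m))) * x
       + p * (p + p * r) / (p * r) ^ 6 *
         ((p ^ (S (S m)) - (p * r) ^ (S (S m)) * x) * (p ^ (S m) - (p * r) ^ (S m) * x)
          / (pq_int p (p * r) (S (S m)) * pq_int p (p * r) (S m))).
Proof. intros p0 p1 r0 r1 Hx.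
  rewrite (Mop_red p r p0 r0 r1 (S m) (x ^ 2) (- 2 * x) 1); auto; [| intros; ring].
  set (n := S (S m)).
  set (D := fun k => ri r (n + k) * ri r (n + k - 1)).
  set (bser := fun k => x ^ 2 * w r x n k
     + (- 2 * x / p * (ri r m / ri r n)) * (w r x n k * (ri r k / ri r (n + k)))
     + (1 / p ^ 2 * ((1 + r) / r ^ 6)) * (w r x n k / D k)
     + (1 / p ^ 2 * ((1 + r) ^ 2 / r ^ 5)) * (w r x n k * (ri r k / D k))
     + (1 / p ^ 2 * (1 / r ^ 2)) * (w r x n k * (ri r k * ri r (k - 1) / D k))).
  assert (Hb : is_series bser (x ^ 2 * 1
     + (- 2 * x / p * (ri r m / ri r n)) * x
     + (1 / p ^ 2 * ((1 + r) / r ^ 6)) * ((1 - r ^ (S m) * x) * (1 - r ^ (S (S m)) * x) / (ri r (S (S m)) * ri r (S m)))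
     + (1 / p ^ 2 * ((1 + r) ^ 2 / r ^ 5)) * (x * (1 - r ^ (S (S m)) * x) / ri r (S (S m)))
     + (1 / p ^ 2 * (1 / r ^ 2)) * (x ^ 2))).
  { repeat apply isR_plus; apply isR_scal.
    apply W0; auto; lra. apply W1; auto; lra. apply W2c; auto; lra.
    apply (W2b r r0 r1 x (proj1 Hx) (proj2 Hx) (S m)). apply W2a; auto; lra. }
  eapply Rle_trans. apply (ser_cmp _ bser (fun k => (1 + 2 / p + 1 / p ^ 2) * w r x n k)).
  - intros k. unfold bser. pose proof (w_nonneg r x n k r0 r1 Hx).
    pose proof (P2 r r0 r1 m k). pose proof (P3 r r0 r1 m k). fold n in H0, H1. fold (D k) in H1.
    replace (x ^ 2 * w r x n k + - 2 * x / p * (ri r m / ri r n) * (w r x n k * (ri r k / ri r (n + k))) +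
      1 / p ^ 2 * ((1 + r) / r ^ 6) * (w r x n k / D k) +
      1 / p ^ 2 * ((1 + r) ^ 2 / r ^ 5) * (w r x n k * (ri r k / D k)) +
      1 / p ^ 2 * (1 / r ^ 2) * (w r x n k * (ri r k * ri r (k - 1) / D k))) with
      (w r x n k * (x ^ 2 + (- 2 * x / p) * (ri r m / ri r n * (ri r k / ri r (n + k)))
          + 1 / p ^ 2 * ((1 + r) / r ^ 6 * (1 / D k) + (1 + r) ^ 2 / r ^ 5 * (ri r k / D k)
          + 1 / r ^ 2 * (ri r k * ri r (k - 1) / D k)))) by (unfold Rdiv; ring).
    apply Rmult_le_compat_l; auto.
    assert (Hp2 : 0 < 1 / p ^ 2) by (apply Rdiv_lt_0_compat; [lra| apply pow_lt; lra]).
    assert (Hc : - 2 * x / p <= 0).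
    { unfold Rdiv. assert (0 < / p) by (apply Rinv_0_lt_compat; lra). nra. }
    assert (X1 : - 2 * x / p * A r n k <= - 2 * x / p * (ri r m / ri r n * (ri r k / ri r (n + k)))).
    { apply Rmult_le_compat_neg_l; auto. }
    assert (X2 : 1 / p ^ 2 * (A r n k * A r n (S k)) <= 1 / p ^ 2 * ((1 + r) / r ^ 6 * (1 / D k) + (1 + r) ^ 2 / r ^ 5 * (ri r k / D k)
          + 1 / r ^ 2 * (ri r k * ri r (k - 1) / D k))).
    { apply Rmult_le_compat_l; lra. }
    replace (x ^ 2 + - 2 * x * A r n k / p + 1 * (A r n k * A r n (S k)) / p ^ 2) with
      (x ^ 2 + - 2 * x / p * A r n k + 1 / p ^ 2 * (A r n k * A r n (S k))) by (unfold Rdiv; ring).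
    lra.
  - intros k. pose proof (w_nonneg r x n k r0 r1 Hx). pose proof (A_bounds r r0 r1 n k).
    pose proof (A_bounds r r0 r1 n (S k)).
    rewrite Rabs_mult, (Rabs_pos_eq (w _ _ _ _)); auto. rewrite Rmult_comm.
    apply Rmult_le_compat_r; auto.
    assert (Hip : 0 < / p) by (apply Rinv_0_lt_compat; lra).
    assert (Hip2 : / p ^ 2 = / p * / p) by (simpl; field; lra).
    replace (x ^ 2 + - 2 * x * A r n k / p + 1 * (A r n k * A r n (S k)) / p ^ 2) with
      (x * x - 2 * x * A r n k * / p + A r n k * A r n (S k) * (/ p * / p)) by (rewrite <- Hip2; unfold Rdiv; simpl; ring).
    replace (1 + 2 / p + 1 / p ^ 2) with (1 + 2 * / p + / p * / p) by (rewrite <- Hip2; unfold Rdiv; ring).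
    assert (0 <= A r n k * A r n (S k) <= 1) by nra.
    assert (XA : 0 <= x * A r n k <= 1) by (split; nra).
    assert (0 <= x * A r n k * / p <= / p).
    { split. apply Rmult_le_pos; lra. rewrite <- (Rmult_1_l (/ p)) at 2. apply Rmult_le_compat_r; lra. }
    assert (0 < / p * / p) by nra.
    assert (0 <= A r n k * A r n (S k) * (/ p * / p) <= / p * / p).
    { split. apply Rmult_le_pos; lra. rewrite <- (Rmult_1_l (/ p * / p)) at 2. apply Rmult_le_compat_r; lra. }
    apply Rabs_le. split; nra.
  - eexists. apply isR_scal, W0; auto; lra.
  - exact Hb.
  - unfold n. rewrite !pq_int_convS; auto. rewrite !Rpow_mult_distr.
    pose proof (key p r m p0 p1 r0 r1) as Hk.
    pose proof (ri_pos r r0 r1 (S (S m)) ltac:(lia)).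
    pose proof (ri_pos r r0 r1 (S m) ltac:(lia)).
    pose proof (pow_lt p m p0). 
    set (K := 2 / (p ^ 3 * r ^ 2 * p ^ m * ri r (S (S m))) *
       (1 + p * r - p * p ^ m * ri r (S (S m)) + p ^ 2 * r ^ 2 * p ^ m * ri r m)).
    assert (HK : 0 <= K).
    { unfold K. assert (0 < p ^ 3) by (apply pow_lt; lra). assert (0 < r ^ 2) by (apply pow_lt; lra).
      assert (0 < p ^ 3 * r ^ 2 * p ^ m * ri r (S (S m))).
      { apply Rmult_lt_0_compat; [apply Rmult_lt_0_compat; [apply Rmult_lt_0_compat|]|]; lra. }
      apply Rmult_le_pos. apply Rlt_le, Rdiv_lt_0_compat; lra. 
      assert (p ^ 2 = p * p) by (simpl; ring). rewrite H5. nra. }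
    match goal with |- ?L <= ?R => assert (E : R - L = x ^ 2 * K) end.
    { unfold K. simpl. field. repeat split; lra. }
    assert (0 <= x ^ 2 * K) by (apply Rmult_le_pos; [apply pow2_ge_0 | exact HK]).
    lra.
Qed.

Lemma pq_int_rec p q k : p <> q -> pq_int p q (S k) = p ^ k + q * pq_int p q k.
Proof. intros H. unfold pq_int. simpl. field. lra. Qed.

Lemma pq_int_bound p q k : 0 < q -> q < p -> p <= 1 -> pq_int p q k * (1 - q) <= 1.
Proof. intros q0 qp p1. induction k.
  - unfold pq_int; simpl. replace ((1 - 1) / (p - q) * (1 - q)) with 0 by (field; lra). lra.
  - rewrite pq_int_rec by lra. assert (p ^ k <= 1) by (apply pow_le1_compat; lra).
    assert (0 <= p ^ k) by (apply pow_le; lra). nra.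
Qed.

Lemma diff_nonneg p r k : 0 < p -> 0 < r -> r < 1 -> 0 <= p ^ k - (p * r) ^ k * 1.
Proof. intros. rewrite Rpow_mult_distr. pose proof (pow_lt p k H). pose proof (pow_le1 r H0 H1 k). nra. Qed.

Theorem corollary1 (p q : R) (n : nat) :
  0 < q -> q < p -> p <= 1 ->
  forall x : R, 0 <= x <= 1 ->
  ((1 <= n)%nat ->
     Mop p q n (fun t => t - x) x <=
       (p ^ n - q ^ n * x) / (q ^ 2 * pq_int p q n) + (1 / q - 1) * x) /\
  ((2 <= n)%nat ->
     Mop p q n (fun t => (t - x) ^ 2) x <=
       x ^ 2 * (1 - 1 / q ^ 2 + 2 * (q + 1) / (q ^ 2 * pq_int p q n))
       + (p + q) ^ 2 / q ^ 5 * ((p ^ n - q ^ n * x) / pq_int p q n) * x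
       + p * (p + q) / q ^ 6 *
         ((p ^ n - q ^ n * x) * (p ^ (n - 1) - q ^ (n - 1) * x)
          / (pq_int p q n * pq_int p q (n - 1)))).
Proof.
  intros q0 qp p1 x Hx.
  assert (p0 : 0 < p) by lra.
  set (r := q / p).
  assert (Hq : q = p * r) by (unfold r; field; lra).
  clearbody r. subst q.
  assert (r0 : 0 < r) by nra.
  assert (r1 : r < 1) by nra.
  assert (Hpr : 0 < p * r) by lra.
  split.
  - intros Hn. destruct n as [|n']; [lia|].
    destruct (Rlt_dec x 1) as [Hlt|Hge].
    + apply part1_lt; auto; lra.
    + assert (x = 1) by lra. subst x. unfold Mop. destruct (Rlt_dec 1 1); [lra|].
      pose proof (diff_nonneg p r (S n') p0 r0 r1).
      assert (0 < pq_int p (p * r) (S n')).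
      { rewrite pq_int_convS; auto. pose proof (pow_lt p n' p0).
        pose proof (ri_pos r r0 r1 (S n') ltac:(lia)). nra. }
      assert (0 <= (p ^ S n' - (p * r) ^ S n' * 1) / ((p * r) ^ 2 * pq_int p (p * r) (S n'))).
      { apply Rdiv_le_0_compat; auto. apply Rmult_lt_0_compat; auto. apply pow_lt; auto. }
      assert (1 <= 1 / (p * r)).
      { unfold Rdiv. rewrite Rmult_1_l. rewrite <- Rinv_1. apply Rinv_le_contravar; nra. }
      lra.
  - intros Hn. destruct n as [|[|m]]; try lia.
    replace (S (S m) - 1)%nat with (S m) by lia.
    destruct (Rlt_dec x 1) as [Hlt|Hge].
    + apply part2_lt; auto; lra.
    + assert (x = 1) by lra. subst x. unfold Mop. destruct (Rlt_dec 1 1); [lra|].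
      pose proof (diff_nonneg p r (S (S m)) p0 r0 r1).
      pose proof (diff_nonneg p r (S m) p0 r0 r1).
      set (I2 := pq_int p (p * r) (S (S m))). set (I1 := pq_int p (p * r) (S m)).
      assert (HI2 : 0 < I2).
      { unfold I2. rewrite pq_int_convS; auto. pose proof (pow_lt p (S m) p0).
        pose proof (ri_pos r r0 r1 (S (S m)) ltac:(lia)). nra. }
      assert (HI1 : 0 < I1).
      { unfold I1. rewrite pq_int_convS; auto. pose proof (pow_lt p m p0).
        pose proof (ri_pos r r0 r1 (S m) ltac:(lia)). nra. }
      assert (HB : I2 * (1 - p * r) <= 1) by (apply pq_int_bound; nra).
      assert (T1 : 0 <= 1 ^ 2 * (1 - 1 / (p * r) ^ 2 + 2 * (p * r + 1) / ((p * r) ^ 2 * I2))).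
      { replace (1 ^ 2 * (1 - 1 / (p * r) ^ 2 + 2 * (p * r + 1) / ((p * r) ^ 2 * I2))) with
          ((p * r + 1) * (2 - I2 * (1 - p * r)) / ((p * r) ^ 2 * I2) + (p * r) ^ 2 * I2 * 0)
          by (field; nra).
        rewrite Rmult_0_r, Rplus_0_r. apply Rdiv_le_0_compat. nra.
        apply Rmult_lt_0_compat; auto. apply pow_lt; auto. }
      assert (T2 : 0 <= (p + p * r) ^ 2 / (p * r) ^ 5 * ((p ^ S (S m) - (p * r) ^ S (S m) * 1) / I2) * 1).
      { rewrite Rmult_1_r. apply Rmult_le_pos. apply Rdiv_le_0_compat. apply pow2_ge_0. apply pow_lt; auto.
        apply Rdiv_le_0_compat; auto. }
      assert (T3 : 0 <= p * (p + p * r) / (p * r) ^ 6 *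
         ((p ^ S (S m) - (p * r) ^ S (S m) * 1) * (p ^ S m - (p * r) ^ S m * 1) / (I2 * I1))).
      { apply Rmult_le_pos. apply Rdiv_le_0_compat. nra. apply pow_lt; auto.
        apply Rdiv_le_0_compat. apply Rmult_le_pos; auto. nra. }
      replace ((1 - 1) ^ 2) with 0 by ring. lra.
Qed.
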